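(* Let $c\ge 0$ and let $(f_p)_{p\ge1}$ be real numbers with $f_1=0$ and $$f_p\le c+\frac{1}{p(p-1)}\sum_{k=1}^{p-1}k f_k\quad\text{for all } p\ge 2.$$ Then $f_p\le 2c$ for all $p\ge 1$. *)

(* Defs.v *)
From Stdlib Require Import Reals.
Open Scope R_scope.

(* Main.v *)
Require Import Defs.
From Stdlib Require Import Reals Lra Lia.
Open Scope R_scope.

Lemma sum_bound (c : R) (f : nat -> R) (hc : 0 <= c) : forall n,
  (forall j, (j <= n)%nat -> f (S j) <= 2 * c) ->
  sum_f_R0 (fun j => INR (S j) * f (S j)) n <= c * INR (S n) * INR (S (S n)).
Proof.
  induction n as [|n IH]; intros H.
  - simpl. specialize (H 0%nat (le_n 0)). lra.
  - rewrite tech5.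
    assert (H1 : sum_f_R0 (fun j => INR (S j) * f (S j)) n <= c * INR (S n) * INR (S (S n)))
      by (apply IH; intros j Hj; apply H; lia).
    assert (H2 : INR (S (S n)) * f (S (S n)) <= INR (S (S n)) * (2 * c)).
    { apply Rmult_le_compat_l. apply pos_INR. apply H. lia. }
    assert (E : c * INR (S (S n)) * INR (S (S (S n))) =
      c * INR (S n) * INR (S (S n)) + INR (S (S n)) * (2 * c))
      by (rewrite !S_INR; ring).
    lra.
Qed.

Theorem lemma2p3 (c : R) (f : nat -> R) (hc : 0 <= c) (hf1 : f 1%nat = 0)
  (hrec : forall p : nat, (2 <= p)%nat ->
     f p <= c + / (INR p * (INR p - 1)) *
              sum_f_R0 (fun j => INR (S j) * f (S j)) (p - 2)) :
  forall p : nat, (1 <= p)%nat -> f p <= 2 * c.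
Proof.
  assert (Hs : forall n p, (1 <= p <= n)%nat -> f p <= 2 * c).
  { induction n as [|n IH]; intros p Hp; [lia|].
    destruct p as [|[|m]]; [lia| rewrite hf1; lra |].
    specialize (hrec (S (S m)) ltac:(lia)).
    replace (S (S m) - 2)%nat with m in hrec by lia.
    assert (Hb := sum_bound c f hc m (fun j Hj => IH (S j) ltac:(lia))).
    set (s := sum_f_R0 _ m) in *.
    assert (Hpos : 0 < INR (S (S m)) * (INR (S (S m)) - 1)).
    { rewrite !S_INR. pose proof (pos_INR m). nra. }
    assert (Hk : / (INR (S (S m)) * (INR (S (S m)) - 1)) * s <= c).
    { apply (Rmult_le_reg_l (INR (S (S m)) * (INR (S (S m)) - 1))); auto.
      rewrite <- Rmult_assoc, Rinv_r by lra.
      rewrite !S_INR in *. nra. }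
    lra. }
  intros p Hp. apply (Hs p). lia.
Qed.
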